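(* Let $Y=\ell_1^N$ (real or complex) and let $m$ be a positive integer. For $j_1,\dots,j_m\in\{1,\dots,N\}$ (not necessarily distinct) define the $m$-homogeneous polynomial $$Q_{j_1,\dots,j_m}(x)=\prod_{k=1}^m e^*_{j_k}(x)+\Big[\sum_{j\in\{j_1,\dots,j_m\}}e^*_j(x)\Big]^m,$$ where the sum runs over the set $\{j_1,\dots,j_m\}$ (each distinct index once). Then $x\in B_Y$ satisfies $|Q_{j_1,\dots,j_m}(x)|=\|Q_{j_1,\dots,j_m}\|$ if and only if $x=\frac{c}{m}\sum_{k=1}^me_{j_k}$ for some scalar $c$ with $|c|=1$. Consequently $Q_{j_1,\dots,j_m}$ strongly attains its norm at $\frac1m\sum_{k=1}^me_{j_k}$.
   Context: $\{e_j\}$ is the canonical basis of $\ell_1^N$ and $\{e_j^*\}$ the coordinate functionals. The norm of a polynomial $P$ is $\|P\|=\sup_{x\in B_Y}|P(x)|$. A nonzero $P$ strongly attains its norm at $x\in B_Y$ if for every sequence $\{x_n\}\subset B_Y$ with $|P(x_n)|\to\|P\|$ there are a scalar $\lambda$ with $|\lambda|=1$ and a subsequence of $\{x_n\}$ converging to $\lambda x$. *)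

(* Defs.v *)
From Stdlib Require Import Reals Lra List Arith.
Open Scope R_scope.

Definition Cx : Type := (R * R)%type.
Definition Czero : Cx := (0, 0).
Definition Cone : Cx := (1, 0).
Definition RtoC (r : R) : Cx := (r, 0).
Definition Cadd (z w : Cx) : Cx := (fst z + fst w, snd z + snd w).
Definition Cmul (z w : Cx) : Cx :=
  (fst z * fst w - snd z * snd w, fst z * snd w + snd z * fst w).
Definition Csub (z w : Cx) : Cx := (fst z - fst w, snd z - snd w).
Fixpoint Cpow (z : Cx) (n : nat) : Cx :=
  match n with O => Cone | S n' => Cmul z (Cpow z n') end.
Definition Cmod (z : Cx) : R := sqrt (fst z * fst z + snd z * snd z).

(* Scalar field selector: [is_real = true] means the real case (K = R),
   [is_real = false] means the complex case (K = Cx). *)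
Definition scalar (is_real : bool) (z : Cx) : Prop :=
  if is_real then snd z = 0 else True.

Definition vec : Type := nat -> Cx.

Definition inY (is_real : bool) (N : nat) (x : vec) : Prop :=
  (forall j, scalar is_real (x j)) /\ (forall j, (N <= j)%nat -> x j = Czero).

Fixpoint sumR (n : nat) (f : nat -> R) : R :=
  match n with O => 0 | S n' => sumR n' f + f n' end.

Definition l1norm (N : nat) (x : vec) : R := sumR N (fun j => Cmod (x j)).

Definition inB (is_real : bool) (N : nat) (x : vec) : Prop :=
  inY is_real N x /\ l1norm N x <= 1.

Definition vscale (c : Cx) (x : vec) : vec := fun j => Cmul c (x j).
Definition vsub (x y : vec) : vec := fun j => Csub (x j) (y j).

Definition pnorm_is (is_real : bool) (N : nat) (P : vec -> Cx) (r : R) : Prop :=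
  is_lub (fun t => exists y, inB is_real N y /\ t = Cmod (P y)) r.

Definition strongly_attains (is_real : bool) (N : nat) (P : vec -> Cx) (x : vec) : Prop :=
  (exists y, inY is_real N y /\ P y <> Czero) /\
  inB is_real N x /\
  forall r, pnorm_is is_real N P r ->
  forall xs : nat -> vec,
    (forall n, inB is_real N (xs n)) ->
    Un_cv (fun n => Cmod (P (xs n))) r ->
    exists lam : Cx, scalar is_real lam /\ Cmod lam = 1 /\
    exists phi : nat -> nat, (forall n, (phi n < phi (S n))%nat) /\
      Un_cv (fun n => l1norm N (vsub (xs (phi n)) (vscale lam x))) 0.

(* e_j^*(x) = x j ;  js = [j_1; ...; j_m] (0-based indices) *)
Definition Cprod_list (l : list Cx) : Cx := fold_right Cmul Cone l.
Definition Csum_list (l : list Cx) : Cx := fold_right Cadd Czero l.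

Definition Q (js : list nat) (x : vec) : Cx :=
  Cadd (Cprod_list (map x js))
       (Cpow (Csum_list (map x (nodup Nat.eq_dec js))) (length js)).

(* (c/m) * sum_k e_{j_k} : coordinate i equals c * (#{k | j_k = i}) / m *)
Definition target (js : list nat) (c : Cx) : vec :=
  fun i => Cmul c (RtoC (INR (count_occ Nat.eq_dec js i) / INR (length js))).

(* Main.v *)
Require Import Defs.
From Stdlib Require Import Reals Lra Lia Psatz List Arith Rtopology ClassicalEpsilon FunctionalExtensionality.
Open Scope R_scope.

Lemma Cx_eq (z w : Cx) : fst z = fst w -> snd z = snd w -> z = w.
Proof. destruct z, w; simpl; intros; subst; reflexivity. Qed.

Lemma Cring_th : ring_theory Czero Cone Cadd Cmul Csub (fun z => (- fst z, - snd z)) (@eq Cx).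
Proof.
  constructor; intros; apply Cx_eq; unfold Cadd, Cmul, Csub, Czero, Cone; simpl; ring.
Qed.
Add Ring Cring : Cring_th.

Lemma Cmod_ge0 z : 0 <= Cmod z.
Proof. apply sqrt_pos. Qed.

Lemma Cmod_mul z w : Cmod (Cmul z w) = Cmod z * Cmod w.
Proof.
  unfold Cmod, Cmul; simpl. rewrite <- sqrt_mult_alt by nra. f_equal. ring.
Qed.

Lemma Cmod_RtoC r : Cmod (RtoC r) = Rabs r.
Proof. unfold Cmod, RtoC; simpl. rewrite <- sqrt_Rsqr_abs. unfold Rsqr. f_equal; ring. Qed.

Lemma Cmod_pow z n : Cmod (Cpow z n) = Cmod z ^ n.
Proof.
  induction n; simpl. - unfold Cmod, Cone; simpl. replace (1*1+0*0) with 1 by ring; apply sqrt_1.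
  - rewrite Cmod_mul, IHn; ring.
Qed.


Lemma Cmod_sq z : Cmod z * Cmod z = fst z * fst z + snd z * snd z.
Proof. unfold Cmod. apply sqrt_sqrt. nra. Qed.

Lemma Cmod_triangle z w : Cmod (Cadd z w) <= Cmod z + Cmod w.
Proof.
  pose proof (Cmod_sq z); pose proof (Cmod_sq w); pose proof (Cmod_sq (Cadd z w)).
  pose proof (Cmod_ge0 z); pose proof (Cmod_ge0 w); pose proof (Cmod_ge0 (Cadd z w)).
  unfold Cadd in *; simpl in *.
  destruct z as [a b], w as [c d]; simpl in *.
  set (A := Cmod (a,b)) in *; set (B := Cmod (c,d)) in *; set (C := Cmod (a+c,b+d)) in *.
  assert (a*c+b*d <= A*B).
  { destruct (Rle_dec (a*c+b*d) 0). nra.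
    apply Rsqr_incr_0_var. unfold Rsqr.
    replace (A*B*(A*B)) with ((A*A)*(B*B)) by ring. rewrite H, H0. pose proof (Rle_0_sqr (a*d-b*c)); unfold Rsqr in *; nra. apply Rmult_le_pos; apply Cmod_ge0. }
  apply Rsqr_incr_0_var; unfold Rsqr; nra.
Qed.

Lemma Cmod_fst z : fst z <= Cmod z.
Proof.
  pose proof (Cmod_sq z); pose proof (Cmod_ge0 z).
  destruct (Rle_dec (fst z) 0). lra. apply Rsqr_incr_0_var; unfold Rsqr; nra.
Qed.

Lemma Cmod_fst_eq z : fst z = Cmod z -> snd z = 0.
Proof. intros. pose proof (Cmod_sq z). rewrite <- H in H0. nra. Qed.

Lemma Cmod_fst_abs z : Rabs (fst z) <= Cmod z.
Proof.
  pose proof (Cmod_sq z); pose proof (Cmod_ge0 z).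
  apply Rsqr_incr_0_var. rewrite <- Rsqr_abs; unfold Rsqr; nra. lra.
Qed.
Lemma Cmod_snd_abs z : Rabs (snd z) <= Cmod z.
Proof.
  pose proof (Cmod_sq z); pose proof (Cmod_ge0 z).
  apply Rsqr_incr_0_var. rewrite <- Rsqr_abs; unfold Rsqr; nra. lra.
Qed.
Lemma Cmod_le_abs z : Cmod z <= Rabs (fst z) + Rabs (snd z).
Proof.
  pose proof (Cmod_sq z); pose proof (Cmod_ge0 z).
  pose proof (Rabs_pos (fst z)); pose proof (Rabs_pos (snd z)).
  apply Rsqr_incr_0_var. unfold Rsqr. rewrite H.
  assert (fst z * fst z = Rabs (fst z) * Rabs (fst z)) by (rewrite <- Rabs_mult; rewrite Rabs_right; nra).
  assert (snd z * snd z = Rabs (snd z) * Rabs (snd z)) by (rewrite <- Rabs_mult; rewrite Rabs_right; nra).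
  nra. lra.
Qed.

Definition sumL (l : list nat) (f : nat -> R) : R := fold_right (fun j acc => f j + acc) 0 l.
Definition prodL (l : list nat) (f : nat -> R) : R := fold_right (fun j acc => f j * acc) 1 l.

Lemma Cmod_prod (x : nat -> Cx) (l : list nat) : Cmod (Cprod_list (map x l)) = prodL l (fun j => Cmod (x j)).
Proof.
  induction l; simpl. - unfold Cmod, Cone; simpl. replace (1*1+0*0) with 1 by ring; apply sqrt_1.
  - rewrite Cmod_mul, IHl; reflexivity.
Qed.

Lemma Cmod_sum_le (x : nat -> Cx) (l : list nat) : Cmod (Csum_list (map x l)) <= sumL l (fun j => Cmod (x j)).
Proof.
  induction l; simpl. - unfold Cmod, Czero; simpl. replace (0*0+0*0) with 0 by ring; rewrite sqrt_0; lra.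
  - eapply Rle_trans. apply Cmod_triangle. lra.
Qed.

Lemma fst_Csum (f : nat -> Cx) (l : list nat) : fst (Csum_list (map f l)) = sumL l (fun j => fst (f j)).
Proof. induction l; simpl; auto. rewrite IHl; auto. Qed.
Lemma snd_Csum (f : nat -> Cx) (l : list nat) : snd (Csum_list (map f l)) = sumL l (fun j => snd (f j)).
Proof. induction l; simpl; auto. rewrite IHl; auto. Qed.

Lemma Cmul_Csum k (x : nat -> Cx) (l : list nat) : Cmul k (Csum_list (map x l)) = Csum_list (map (fun i => Cmul k (x i)) l).
Proof. induction l; simpl. - apply Cx_eq; unfold Cmul, Czero; simpl; ring. - rewrite <- IHl. ring. Qed.

Lemma sumL_plus l f g : sumL l (fun i => f i + g i) = sumL l f + sumL l g.
Proof. induction l; simpl; lra. Qed.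
Lemma sumL_scal l c f : sumL l (fun i => c * f i) = c * sumL l f.
Proof. induction l; simpl; lra. Qed.
Lemma sumL_ext l f g : (forall i, In i l -> f i = g i) -> sumL l f = sumL l g.
Proof. induction l; simpl; intros; auto. rewrite H, IHl; auto. Qed.
Lemma sumL_le l f g : (forall i, In i l -> f i <= g i) -> sumL l f <= sumL l g.
Proof. induction l; simpl; intros. lra. pose proof (H a (or_introl eq_refl)). pose proof (IHl (fun i h => H i (or_intror h))). lra. Qed.
Lemma sumL_eq_termwise l f g : (forall i, In i l -> f i <= g i) -> sumL l f = sumL l g ->
  forall i, In i l -> f i = g i.
Proof.
  induction l; simpl; intros. contradiction.
  pose proof (H a (or_introl eq_refl)).
  pose proof (sumL_le l f g (fun i h => H i (or_intror h))).
  destruct H1. subst. lra. apply IHl; auto. lra.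
Qed.

Lemma sumL_delta L a g : NoDup L ->
  sumL L (fun i => (if Nat.eq_dec a i then 1 else 0) * g i) = if in_dec Nat.eq_dec a L then g a else 0.
Proof.
  induction L; simpl; intros. auto.
  inversion H; subst. rewrite IHL by auto.
  destruct (Nat.eq_dec a0 a); destruct (in_dec Nat.eq_dec a L); destruct (Nat.eq_dec a a0); subst; try tauto; try lra.
Qed.

Lemma INR_count_cons a l i : INR (count_occ Nat.eq_dec (a :: l) i) = INR (count_occ Nat.eq_dec l i) + (if Nat.eq_dec a i then 1 else 0).
Proof. simpl. destruct (Nat.eq_dec a i); [rewrite S_INR|]; lra. Qed.

Lemma sumL_count l g : sumL l g = sumL (nodup Nat.eq_dec l) (fun i => INR (count_occ Nat.eq_dec l i) * g i).
Proof.
  induction l. simpl; auto.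
  simpl nodup. 
  assert (E: sumL (nodup Nat.eq_dec l) (fun i => INR (count_occ Nat.eq_dec (a :: l) i) * g i)
     = sumL (nodup Nat.eq_dec l) (fun i => INR (count_occ Nat.eq_dec l i) * g i)
       + sumL (nodup Nat.eq_dec l) (fun i => (if Nat.eq_dec a i then 1 else 0) * g i)).
  { rewrite <- sumL_plus. apply sumL_ext; intros. rewrite INR_count_cons. ring. }
  rewrite sumL_delta in E by apply NoDup_nodup.
  destruct (in_dec Nat.eq_dec a l).
  - etransitivity; [| symmetry; apply E]. rewrite <- IHl. destruct (in_dec Nat.eq_dec a (nodup Nat.eq_dec l)).
    simpl; ring. exfalso; apply n; apply nodup_In; auto.
  - simpl sumL at 2. etransitivity; [| apply f_equal2; [reflexivity| symmetry; apply E]]. rewrite <- IHl. destruct (in_dec Nat.eq_dec a (nodup Nat.eq_dec l)).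
    exfalso; apply n; apply nodup_In in i; auto.
    rewrite (proj1 (count_occ_not_In Nat.eq_dec l a)) by auto.
    destruct (Nat.eq_dec a a); [|tauto]. simpl. ring.
Qed.

Lemma prodL_nonneg l f : (forall i, In i l -> 0 <= f i) -> 0 <= prodL l f.
Proof. induction l; simpl; intros. lra. apply Rmult_le_pos; auto. Qed.
Lemma prodL_pos l f : (forall i, In i l -> 0 < f i) -> 0 < prodL l f.
Proof. induction l; simpl; intros. lra. apply Rmult_lt_0_compat; auto. Qed.
Lemma prodL_le l f g : (forall i, In i l -> 0 <= f i <= g i) -> prodL l f <= prodL l g.
Proof.
  induction l; simpl; intros. lra.
  pose proof (H a (or_introl eq_refl)). assert (prodL l f <= prodL l g) by auto.
  assert (0 <= prodL l f) by (apply prodL_nonneg; intros; apply H; auto). nra.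
Qed.
Lemma prodL_eq_termwise l f g : (forall i, In i l -> 0 <= f i <= g i) -> (forall i, In i l -> 0 < g i) ->
  prodL l f = prodL l g -> forall i, In i l -> f i = g i.
Proof.
  induction l; simpl; intros. contradiction.
  pose proof (H a (or_introl eq_refl)). pose proof (H0 a (or_introl eq_refl)).
  assert (prodL l f <= prodL l g) by (apply prodL_le; auto).
  assert (0 <= prodL l f) by (apply prodL_nonneg; intros; apply H; auto).
  assert (0 < prodL l g) by (apply prodL_pos; auto).
  assert (f a = g a).
  { destruct (Req_dec (f a) (g a)); auto. nra. }
  assert (prodL l f = prodL l g).
  { rewrite H8 in H1. apply Rmult_eq_reg_l in H1; auto. lra. }
  destruct H2; subst; auto.
Qed.
Lemma prodL_mult l f g : prodL l (fun i => f i * g i) = prodL l f * prodL l g.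
Proof. induction l; simpl; intros. lra. rewrite IHl; ring. Qed.

Lemma prodL_exp l f : prodL l (fun i => exp (f i)) = exp (sumL l f).
Proof. induction l; simpl. rewrite exp_0; auto. rewrite IHl, exp_plus; auto. Qed.

Lemma sumR_plus n f g : sumR n (fun i => f i + g i) = sumR n f + sumR n g.
Proof. induction n; simpl; lra. Qed.
Lemma sumR_ext n f g : (forall i, (i < n)%nat -> f i = g i) -> sumR n f = sumR n g.
Proof. induction n; simpl; intros; auto. rewrite IHn, H; auto. Qed.
Lemma sumR_nonneg n f : (forall i, (i < n)%nat -> 0 <= f i) -> 0 <= sumR n f.
Proof. induction n; simpl; intros. lra. pose proof (H n ltac:(lia)). assert (0 <= sumR n f) by auto. lra. Qed.
Lemma sumR_term_le n f j : (forall i, (i < n)%nat -> 0 <= f i) -> (j < n)%nat -> f j <= sumR n f.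
Proof.
  induction n; simpl; intros. lia.
  destruct (Nat.eq_dec j n). subst. assert (0 <= sumR n f) by (apply sumR_nonneg; auto). lra.
  assert (f j <= sumR n f) by (apply IHn; auto; lia). pose proof (H n ltac:(lia)). lra.
Qed.
Lemma sumR_zero n : sumR n (fun _ => 0) = 0.
Proof. induction n; simpl; lra. Qed.
Lemma sumR_delta n a g : (a < n)%nat -> sumR n (fun i => if Nat.eq_dec i a then g i else 0) = g a.
Proof.
  induction n; simpl; intros. lia.
  destruct (Nat.eq_dec n a).
  - subst. rewrite (sumR_ext _ _ (fun _ => 0)). rewrite sumR_zero; lra.
    intros; destruct (Nat.eq_dec i a); lia || lra.
  - rewrite IHn by lia. lra.
Qed.

Lemma sumR_decomp N L f : NoDup L -> Forall (fun j => (j < N)%nat) L ->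
  sumR N f = sumL L f + sumR N (fun i => if in_dec Nat.eq_dec i L then 0 else f i).
Proof.
  induction L; intros.
  - simpl. rewrite Rplus_0_l. apply sumR_ext. intros; reflexivity.
  - inversion H; inversion H0; subst. rewrite IHL by auto. change (sumL (a :: L) f) with (f a + sumL L f).
    rewrite (sumR_ext N (fun i => if in_dec Nat.eq_dec i L then 0 else f i)
       (fun i => (if in_dec Nat.eq_dec i (a :: L) then 0 else f i) + (if Nat.eq_dec i a then f i else 0))).
    rewrite sumR_plus, sumR_delta by auto. ring.
    intros. destruct (in_dec Nat.eq_dec i (a :: L)) as [h|h]; destruct (in_dec Nat.eq_dec i L);
      destruct (Nat.eq_dec i a); subst; simpl in h; first [lra | tauto | (exfalso; destruct h; congruence) | (exfalso; apply h; simpl; tauto)].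
Qed.

Definition wgt (js : list nat) (i : nat) : R := INR (count_occ Nat.eq_dec js i) / INR (length js).
Definition Pstar (js : list nat) : R := prodL js (wgt js).

Lemma sumL_one l : sumL l (fun _ => 1) = INR (length l).
Proof. induction l; simpl length; [simpl; auto|]. rewrite S_INR. simpl. lra. Qed.

Lemma wgt_pos js i : In i js -> 0 < wgt js i.
Proof.
  intros. unfold wgt. apply Rdiv_lt_0_compat; apply lt_0_INR.
  apply count_occ_In; auto. destruct js; simpl in *; [contradiction| lia].
Qed.
Lemma wgt_nonneg js i : 0 <= wgt js i.
Proof. unfold wgt. destruct js. simpl. unfold Rdiv; rewrite Rinv_0; lra.
  apply Rmult_le_pos; [apply pos_INR| left; apply Rinv_0_lt_compat, lt_0_INR; simpl; lia]. Qed.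
Lemma wgt_notin js i : ~ In i js -> wgt js i = 0.
Proof. intros. unfold wgt. rewrite (proj1 (count_occ_not_In _ _ _) H). simpl. lra. Qed.

Lemma sumL_wgt js : (1 <= length js)%nat -> sumL (nodup Nat.eq_dec js) (wgt js) = 1.
Proof.
  intros. assert (Hm: 0 < INR (length js)) by (apply lt_0_INR; lia).
  pose proof (sumL_count js (fun _ => 1)). rewrite sumL_one in H0.
  unfold wgt. rewrite (sumL_ext _ _ (fun i => / INR (length js) * (INR (count_occ Nat.eq_dec js i) * 1))).
  rewrite sumL_scal, <- H0. field. lra. intros; unfold Rdiv; ring.
Qed.

Lemma sumL_js_div js u : (1 <= length js)%nat ->
  sumL js (fun i => u i / wgt js i) = INR (length js) * sumL (nodup Nat.eq_dec js) u.
Proof.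
  intros. rewrite sumL_count, <- sumL_scal. apply sumL_ext. intros.
  apply nodup_In in H0. pose proof (wgt_pos js i H0). unfold wgt in *.
  assert (0 < INR (count_occ Nat.eq_dec js i)) by (apply lt_0_INR, count_occ_In; auto).
  assert (0 < INR (length js)) by (apply lt_0_INR; lia). field. lra.
Qed.

Lemma tangent u w : 0 < w -> 0 <= u -> u <= w * exp (u / w - 1).
Proof.
  intros. pose proof (exp_ineq1_le (u / w - 1)).
  replace u with (w * (1 + (u/w - 1))) at 1 by (field; lra). apply Rmult_le_compat_l; lra.
Qed.
Lemma tangent_eq u w : 0 < w -> u = w * exp (u / w - 1) -> u = w.
Proof.
  intros. destruct (Req_dec (u / w - 1) 0).
  - assert (u / w = 1) by lra. unfold Rdiv in H2. apply (Rmult_eq_compat_r w) in H2.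
    rewrite Rmult_assoc, Rinv_l in H2; lra.
  - pose proof (exp_ineq1 _ H1). exfalso.
    assert (u = w * (1 + (u/w - 1))) by (field; lra). nra.
Qed.

Lemma amgm js u : (1 <= length js)%nat -> (forall i, 0 <= u i) ->
  sumL (nodup Nat.eq_dec js) u <= 1 ->
  prodL js u <= Pstar js /\ (prodL js u = Pstar js -> forall i, In i js -> u i = wgt js i).
Proof.
  intros Hm Hu Hs.
  set (f := fun i => wgt js i * exp (u i / wgt js i - 1)).
  assert (Hf : forall i, In i js -> 0 <= u i <= f i).
  { intros; split; auto. apply tangent; auto. apply wgt_pos; auto. }
  assert (Hfpos : forall i, In i js -> 0 < f i).
  { intros. unfold f. apply Rmult_lt_0_compat. apply wgt_pos; auto. apply exp_pos. }
  assert (Hpf : prodL js f <= Pstar js).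
  { unfold f, Pstar. rewrite prodL_mult, prodL_exp.
    rewrite (sumL_ext _ _ (fun i => u i / wgt js i + (-1))) by (intros; ring).
    rewrite sumL_plus, sumL_js_div by auto.
    rewrite (sumL_ext js _ (fun _ => -1 * 1)) by (intros; ring). rewrite sumL_scal, sumL_one.
    assert (0 <= prodL js (wgt js)) by (apply prodL_nonneg; intros; apply wgt_nonneg).
    assert (exp (INR (length js) * sumL (nodup Nat.eq_dec js) u + -1 * INR (length js)) <= 1).
    { rewrite <- exp_0. apply exp_le_3 || idtac.
      destruct (Rle_lt_or_eq_dec _ _ (Rle_trans _ _ _ (Rmult_le_compat_l (INR (length js)) _ _ (pos_INR _) Hs) (Req_le _ _ (Rmult_1_r _)))) as [h|h];
      [left; apply exp_increasing; lra | right; f_equal; lra]. }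
    nra. }
  assert (Hpu : prodL js u <= prodL js f) by (apply prodL_le; auto).
  split. lra.
  intros Heq i Hi.
  assert (prodL js u = prodL js f) by lra.
  pose proof (prodL_eq_termwise js u f Hf Hfpos H i Hi).
  apply tangent_eq; auto. apply wgt_pos; auto.
Qed.

Lemma pow_le1 x n : 0 <= x <= 1 -> x ^ n <= 1.
Proof. intros. induction n; simpl. lra. nra. Qed.

Lemma sumL_L_le N js (x : vec) : Forall (fun j => (j < N)%nat) js ->
  sumL (nodup Nat.eq_dec js) (fun j => Cmod (x j)) <= l1norm N x.
Proof.
  intros. unfold l1norm. rewrite (sumR_decomp N (nodup Nat.eq_dec js)).
  assert (0 <= sumR N (fun i => if in_dec Nat.eq_dec i (nodup Nat.eq_dec js) then 0 else Cmod (x i))).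
  { apply sumR_nonneg; intros. destruct (in_dec _ _ _). lra. apply Cmod_ge0. }
  lra. apply NoDup_nodup. rewrite Forall_forall in *. intros. apply H. apply nodup_In in H0; auto.
Qed.

Lemma Q_bound is_real N js x : (1 <= length js)%nat -> Forall (fun j => (j < N)%nat) js ->
  inB is_real N x ->
  Cmod (Cprod_list (map x js)) <= Pstar js /\
  Cmod (Csum_list (map x (nodup Nat.eq_dec js))) <= 1 /\
  Cmod (Q js x) <= 1 + Pstar js.
Proof.
  intros Hm HN [HY Hn].
  pose proof (sumL_L_le N js x HN).
  pose proof (amgm js (fun j => Cmod (x j)) Hm (fun i => Cmod_ge0 _) ltac:(lra)) as [H1 _].
  rewrite <- Cmod_prod in H1.
  pose proof (Cmod_sum_le x (nodup Nat.eq_dec js)).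
  pose proof (Cmod_ge0 (Csum_list (map x (nodup Nat.eq_dec js)))).
  split; auto. split. lra.
  unfold Q. eapply Rle_trans. apply Cmod_triangle. rewrite Cmod_pow.
  pose proof (pow_le1 (Cmod (Csum_list (map x (nodup Nat.eq_dec js)))) (length js) ltac:(lra)). lra.
Qed.

Lemma RtoC_mul a b : RtoC (a * b) = Cmul (RtoC a) (RtoC b).
Proof. apply Cx_eq; unfold RtoC, Cmul; simpl; ring. Qed.
Lemma RtoC_add a b : RtoC (a + b) = Cadd (RtoC a) (RtoC b).
Proof. apply Cx_eq; unfold RtoC, Cadd; simpl; ring. Qed.
Lemma RtoC_1 : RtoC 1 = Cone.
Proof. reflexivity. Qed.

Lemma target_eq js c i : target js c i = Cmul c (RtoC (wgt js i)).
Proof. reflexivity. Qed.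

Lemma prod_target js c l : Cprod_list (map (target js c) l) = Cmul (Cpow c (length l)) (RtoC (prodL l (wgt js))).
Proof.
  induction l; simpl. apply Cx_eq; unfold Cmul, RtoC, Cone; simpl; ring.
  rewrite IHl, target_eq, RtoC_mul. ring.
Qed.
Lemma sum_target js c l : Csum_list (map (target js c) l) = Cmul c (RtoC (sumL l (wgt js))).
Proof.
  induction l; simpl. apply Cx_eq; unfold Cmul, RtoC, Czero; simpl; ring.
  rewrite IHl, target_eq, RtoC_add. ring.
Qed.

Lemma Q_target js c : (1 <= length js)%nat ->
  Q js (target js c) = Cmul (Cpow c (length js)) (RtoC (Pstar js + 1)).
Proof.
  intros. unfold Q. rewrite prod_target, sum_target, sumL_wgt, RtoC_add, RtoC_1 by auto.
  unfold Pstar. replace (Cmul c Cone) with c by ring. ring.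
Qed.

Lemma Pstar_nonneg js : 0 <= Pstar js.
Proof. apply prodL_nonneg; intros; apply wgt_nonneg. Qed.

Lemma Cmod_Q_target js c : (1 <= length js)%nat -> Cmod c = 1 ->
  Cmod (Q js (target js c)) = 1 + Pstar js.
Proof.
  intros. rewrite Q_target, Cmod_mul, Cmod_pow, Cmod_RtoC, H0, pow1 by auto.
  pose proof (Pstar_nonneg js). rewrite Rabs_right; lra.
Qed.

Lemma target_inB is_real N js c : (1 <= length js)%nat -> Forall (fun j => (j < N)%nat) js ->
  scalar is_real c -> Cmod c = 1 -> inB is_real N (target js c).
Proof.
  intros Hm HN Hc Hc1. split. split.
  - intros j. unfold scalar in *. destruct is_real; auto. unfold target, Cmul, RtoC; simpl. rewrite Hc; ring.
  - intros j Hj. rewrite target_eq, wgt_notin. apply Cx_eq; unfold Cmul, RtoC, Czero; simpl; ring.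
    intro h. rewrite Forall_forall in HN. apply HN in h. lia.
  - unfold l1norm. rewrite (sumR_ext _ _ (wgt js)).
    rewrite (sumR_decomp N (nodup Nat.eq_dec js)), sumL_wgt by (auto; try apply NoDup_nodup;
      rewrite Forall_forall in *; intros; apply HN; apply nodup_In in H; auto).
    rewrite (sumR_ext _ _ (fun _ => 0)), sumR_zero. lra.
    intros. destruct (in_dec _ _ _). auto. apply wgt_notin. intro h; apply n; apply nodup_In; auto.
    intros. rewrite target_eq, Cmod_mul, Cmod_RtoC, Hc1, Rabs_right. ring. apply Rle_ge, wgt_nonneg.
Qed.

Lemma pnorm_M is_real N js : (1 <= length js)%nat -> Forall (fun j => (j < N)%nat) js ->
  pnorm_is is_real N (Q js) (1 + Pstar js).
Proof.
  intros Hm HN. split.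
  - intros t [y [Hy ->]]. apply (Q_bound is_real N js y Hm HN Hy).
  - intros b Hb. apply Hb. exists (target js Cone). split.
    apply target_inB; auto. unfold scalar; destruct is_real; simpl; auto.
    unfold Cmod, Cone; simpl. replace (1*1+0*0) with 1 by ring; apply sqrt_1.
    rewrite Cmod_Q_target; auto. unfold Cmod, Cone; simpl. replace (1*1+0*0) with 1 by ring; apply sqrt_1.
Qed.

Definition Cconj (c : Cx) : Cx := (fst c, - snd c).

Lemma Cmod0 z : Cmod z = 0 -> z = Czero.
Proof. intros. pose proof (Cmod_sq z). rewrite H in H0. destruct z; unfold Czero; simpl in *. f_equal; nra. Qed.

Lemma char_eq is_real N js x : (1 <= length js)%nat -> Forall (fun j => (j < N)%nat) js ->
  inB is_real N x -> Cmod (Q js x) = 1 + Pstar js ->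
  exists c, scalar is_real c /\ Cmod c = 1 /\ x = target js c.
Proof.
  intros Hm HN HB HQ.
  pose proof (Q_bound is_real N js x Hm HN HB) as [HA [HS _]].
  set (L := nodup Nat.eq_dec js) in *.
  set (S := Csum_list (map x L)) in *.
  set (A := Cprod_list (map x js)) in *.
  assert (HQ2 : Cmod (Q js x) <= Cmod A + Cmod S ^ length js).
  { unfold Q. rewrite <- Cmod_pow. apply Cmod_triangle. }
  assert (HS1 : Cmod S = 1).
  { destruct (Rle_lt_or_eq_dec _ _ HS); auto.
    pose proof (pow_lt_1_compat (Cmod S) (length js) (conj (Cmod_ge0 S) r) ltac:(lia)). lra. }
  rewrite HS1, pow1 in HQ2.
  assert (HA1 : prodL js (fun j => Cmod (x j)) = Pstar js).
  { unfold A in *; rewrite Cmod_prod in *. lra. }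
  destruct HB as [[Hsc Hzero] Hn].
  pose proof (sumL_L_le N js x HN) as HLe.
  pose proof (amgm js (fun j => Cmod (x j)) Hm (fun i => Cmod_ge0 _) ltac:(eapply Rle_trans; [exact HLe| exact Hn])) as [_ Heq].
  specialize (Heq HA1).
  assert (HsumL : sumL L (fun j => Cmod (x j)) = 1).
  { rewrite (sumL_ext _ _ (wgt js)). apply sumL_wgt; auto.
    intros. apply Heq. apply nodup_In in H; auto. }
  exists S. split; [|split; auto].
  { unfold scalar in *. destruct is_real; auto. unfold S. rewrite snd_Csum.
    rewrite (sumL_ext _ _ (fun _ => 0 * 1)). rewrite sumL_scal; ring. intros; rewrite Hsc; ring. }
  pose proof (Cmod_sq S) as HS2. rewrite HS1 in HS2.
  set (w := fun i => Cmul (Cconj S) (x i)).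
  assert (Hw1 : sumL L (fun i => fst (w i)) = 1).
  { unfold w. rewrite <- fst_Csum, <- Cmul_Csum. fold S. unfold Cmul, Cconj; simpl. lra. }
  assert (Hwc : forall i, Cmod (w i) = Cmod (x i)).
  { intros. unfold w. rewrite Cmod_mul. replace (Cmod (Cconj S)) with (Cmod S). rewrite HS1; ring.
    unfold Cmod, Cconj; simpl. f_equal; ring. }
  assert (Hwt : forall i, In i L -> fst (w i) = Cmod (x i)).
  { apply sumL_eq_termwise. intros. rewrite <- Hwc. apply Cmod_fst. lra. }
  apply functional_extensionality. intros i.
  rewrite target_eq.
  destruct (in_dec Nat.eq_dec i L) as [Hi|Hi].
  - pose proof (Hwt i Hi). pose proof (Cmod_fst_eq (w i) ltac:(rewrite Hwc; auto)).
    rewrite <- (Heq i) by (apply nodup_In in Hi; auto). rewrite <- H.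
    unfold w, Cmul, Cconj, RtoC in *; simpl in *. destruct (x i) as [x1 x2]; simpl in *.
    destruct S as [c1 c2]; simpl in *. assert (H1 : c1*x2 = c2*x1) by lra. pose proof (f_equal (Rmult c2) H1). pose proof (f_equal (Rmult c1) H1). pose proof (f_equal (Rmult x1) HS2). pose proof (f_equal (Rmult x2) HS2). apply Cx_eq; simpl; lra.
  - assert (Hni : ~ In i js) by (intro h; apply Hi; apply nodup_In; auto).
    rewrite wgt_notin by auto.
    replace (Cmul S (RtoC 0)) with Czero by (apply Cx_eq; unfold Cmul, RtoC, Czero; simpl; ring).
    destruct (le_lt_dec N i). apply Hzero; auto.
    apply Cmod0. apply Rle_antisym; [|apply Cmod_ge0].
    unfold l1norm in Hn. rewrite (sumR_decomp N L) in Hn.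
    2: apply NoDup_nodup.
    2: { rewrite Forall_forall in *; intros; apply HN; apply nodup_In in H; auto. }
    pose proof (sumR_term_le N (fun i => if in_dec Nat.eq_dec i L then 0 else Cmod (x i)) i) as T.
    simpl in T. destruct (in_dec Nat.eq_dec i L); [tauto|].
    assert (Cmod (x i) <= sumR N (fun i => if in_dec Nat.eq_dec i L then 0 else Cmod (x i))).
    { apply T; auto. intros; destruct (in_dec _ _ _); [lra | apply Cmod_ge0]. }
    lra.
Qed.

Lemma part1 is_real N js x : (1 <= length js)%nat -> Forall (fun j => (j < N)%nat) js ->
  inB is_real N x ->
  (pnorm_is is_real N (Q js) (Cmod (Q js x)) <->
   exists c, scalar is_real c /\ Cmod c = 1 /\ x = target js c).
Proof.
  intros Hm HN HB. split.
  - intros H. apply (char_eq is_real N); auto.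
    eapply is_lub_u; eauto. apply pnorm_M; auto.
  - intros [c [Hc [Hc1 ->]]]. rewrite Cmod_Q_target; auto. apply pnorm_M; auto.
Qed.

Definition incr (phi : nat -> nat) : Prop := forall n, (phi n < phi (S n))%nat.

Lemma incr_mono phi : incr phi -> forall m n, (m < n)%nat -> (phi m < phi n)%nat.
Proof. intros H m n Hmn. induction Hmn. apply H. pose proof (H m0). lia. Qed.
Lemma incr_ge phi : incr phi -> forall n, (n <= phi n)%nat.
Proof. intros H n. induction n. lia. pose proof (H n). lia. Qed.
Lemma incr_comp phi psi : incr phi -> incr psi -> incr (fun n => phi (psi n)).
Proof. intros H1 H2 n. apply incr_mono; auto. Qed.

Lemma cv_const c : Un_cv (fun _ => c) c.
Proof. intros e He. exists 0%nat. intros. unfold Rdist. rewrite Rminus_diag, Rabs_R0. lra. Qed.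

Lemma subseq_cv u l phi : incr phi -> Un_cv u l -> Un_cv (fun n => u (phi n)) l.
Proof.
  intros Hp Hu e He. destruct (Hu e He) as [N HN]. exists N. intros. apply HN.
  pose proof (incr_ge phi Hp n). lia.
Qed.

Fixpoint build (g : nat -> nat -> nat) (n : nat) : nat :=
  match n with O => g O O | S n' => g n (S (build g n')) end.

Lemma extract un l : ValAdh un l -> exists phi, incr phi /\ Un_cv (fun n => un (phi n)) l.
Proof.
  intros H.
  assert (Hex : forall k N, exists p, (N <= p)%nat /\ Rabs (un p - l) < / (INR k + 1)).
  { intros k N. assert (Hd : 0 < / (INR k + 1)) by (apply Rinv_0_lt_compat; pose proof (pos_INR k); lra).
    destruct (H (disc l (mkposreal _ Hd)) N) as [p [Hp Hv]].
    exists (mkposreal _ Hd). intros y Hy; exact Hy.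
    exists p; split; auto. }
  set (g := fun k N => proj1_sig (constructive_indefinite_description _ (Hex k N))).
  assert (Hg : forall k N, (N <= g k N)%nat /\ Rabs (un (g k N) - l) < / (INR k + 1)).
  { intros. unfold g. destruct (constructive_indefinite_description _ _). simpl. auto. }
  exists (build g). split.
  - intros n. simpl. destruct (Hg (S n) (S (build g n))). lia.
  - intros e He. destruct (INR_unbounded (/ e)) as [N HN]. exists N. intros n Hn.
    unfold Rdist.
    assert (Rabs (un (build g n) - l) < / (INR n + 1)).
    { destruct n; simpl; apply Hg. }
    eapply Rlt_le_trans. apply H0.
    assert (INR N <= INR n) by (apply le_INR; lia).
    pose proof (pos_INR N).
    assert (0 < / e) by (apply Rinv_0_lt_compat; auto).
    rewrite <- (Rinv_inv e). apply Rinv_le_contravar; lra.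
Qed.

Lemma BW_multi K (F : nat -> nat -> R) : (forall n k, (k < K)%nat -> Rabs (F n k) <= 1) ->
  exists phi, incr phi /\ exists Lim : nat -> R, forall k, (k < K)%nat -> Un_cv (fun n => F (phi n) k) (Lim k).
Proof.
  induction K; intros HF.
  - exists (fun n => n). split. intros n; lia. exists (fun _ => 0). intros; lia.
  - destruct IHK as [phi [Hphi [Lim HL]]]. intros; apply HF; lia.
    destruct (Bolzano_Weierstrass (fun n => F (phi n) K) (fun c => -1 <= c <= 1) (compact_P3 (-1) 1))
      as [l Hl].
    { intros n. pose proof (HF (phi n) K ltac:(lia)). simpl. unfold Rabs in H; destruct (Rcase_abs _); lra. }
    destruct (extract _ _ Hl) as [psi [Hpsi Hcv]].
    exists (fun n => phi (psi n)). split. apply incr_comp; auto.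
    exists (fun k => if Nat.eq_dec k K then l else Lim k). intros k Hk.
    destruct (Nat.eq_dec k K). subst; auto.
    apply (subseq_cv (fun n => F (phi n) k)); auto. apply HL; lia.
Qed.

Definition Ccv (zs : nat -> Cx) (z : Cx) : Prop :=
  Un_cv (fun n => fst (zs n)) (fst z) /\ Un_cv (fun n => snd (zs n)) (snd z).

Lemma Ccv_const z : Ccv (fun _ => z) z.
Proof. split; apply cv_const. Qed.
Lemma Ccv_add zs ws z w : Ccv zs z -> Ccv ws w -> Ccv (fun n => Cadd (zs n) (ws n)) (Cadd z w).
Proof. intros [] []; split; simpl; apply CV_plus; auto. Qed.
Lemma Ccv_sub zs ws z w : Ccv zs z -> Ccv ws w -> Ccv (fun n => Csub (zs n) (ws n)) (Csub z w).
Proof. intros [] []; split; simpl; apply CV_minus; auto. Qed.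
Lemma Ccv_mul zs ws z w : Ccv zs z -> Ccv ws w -> Ccv (fun n => Cmul (zs n) (ws n)) (Cmul z w).
Proof. intros [] []; split; simpl; [apply CV_minus | apply CV_plus]; apply CV_mult; auto. Qed.
Lemma Ccv_pow zs z k : Ccv zs z -> Ccv (fun n => Cpow (zs n) k) (Cpow z k).
Proof. intros. induction k; simpl. apply Ccv_const. apply Ccv_mul; auto. Qed.
Lemma Ccv_prod (xs : nat -> vec) (y : vec) l : (forall j, Ccv (fun n => xs n j) (y j)) ->
  Ccv (fun n => Cprod_list (map (xs n) l)) (Cprod_list (map y l)).
Proof. intros. induction l; simpl. apply Ccv_const. apply Ccv_mul; auto. Qed.
Lemma Ccv_sum (xs : nat -> vec) (y : vec) l : (forall j, Ccv (fun n => xs n j) (y j)) ->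
  Ccv (fun n => Csum_list (map (xs n) l)) (Csum_list (map y l)).
Proof. intros. induction l; simpl. apply Ccv_const. apply Ccv_add; auto. Qed.
Lemma Ccv_Q (xs : nat -> vec) (y : vec) js : (forall j, Ccv (fun n => xs n j) (y j)) ->
  Ccv (fun n => Q js (xs n)) (Q js y).
Proof. intros. unfold Q. apply Ccv_add. apply Ccv_prod; auto. apply Ccv_pow, Ccv_sum; auto. Qed.
Lemma Cmod_cv zs z : Ccv zs z -> Un_cv (fun n => Cmod (zs n)) (Cmod z).
Proof.
  intros [H1 H2]. unfold Cmod. apply (continuity_seq sqrt (fun n => fst (zs n) * fst (zs n) + snd (zs n) * snd (zs n))).
  apply continuity_pt_sqrt. nra. apply CV_plus; apply CV_mult; auto.
Qed.
Lemma sumR_cv N (f : nat -> nat -> R) g : (forall j, (j < N)%nat -> Un_cv (fun n => f n j) (g j)) ->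
  Un_cv (fun n => sumR N (f n)) (sumR N g).
Proof. induction N; intros; simpl. apply cv_const. apply CV_plus; auto. Qed.

Lemma strong is_real N js : (1 <= length js)%nat -> Forall (fun j => (j < N)%nat) js ->
  strongly_attains is_real N (Q js) (target js Cone).
Proof.
  intros Hm HN.
  assert (HC1 : Cmod Cone = 1) by (unfold Cmod, Cone; simpl; replace (1*1+0*0) with 1 by ring; apply sqrt_1).
  assert (HCs : scalar is_real Cone) by (unfold scalar; destruct is_real; simpl; auto).
  pose proof (target_inB is_real N js Cone Hm HN HCs HC1) as HT.
  split; [|split; auto].
  { exists (target js Cone). split. apply HT. intro h. pose proof (Cmod_Q_target js Cone Hm HC1).
    rewrite h in H. unfold Cmod, Czero in H; simpl in H. replace (0*0+0*0) with 0 in H by ring.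
    rewrite sqrt_0 in H. pose proof (Pstar_nonneg js). lra. }
  intros r Hr xs Hxs Hcv.
  assert (Hr1 : r = 1 + Pstar js) by (eapply is_lub_u; eauto; apply pnorm_M; auto).
  assert (Hbd : forall n j, (j < N)%nat -> Cmod (xs n j) <= 1).
  { intros. destruct (Hxs n) as [_ Hn]. unfold l1norm in Hn. eapply Rle_trans; [|exact Hn].
    apply (sumR_term_le N (fun j => Cmod (xs n j))); auto. intros; apply Cmod_ge0. }
  destruct (BW_multi N (fun n k => fst (xs n k))) as [phi1 [Hp1 [L1 HL1]]].
  { intros. eapply Rle_trans. apply Cmod_fst_abs. apply Hbd; auto. }
  destruct (BW_multi N (fun n k => snd (xs (phi1 n) k))) as [phi2 [Hp2 [L2 HL2]]].
  { intros. eapply Rle_trans. apply Cmod_snd_abs. apply Hbd; auto. }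
  set (phi := fun n => phi1 (phi2 n)).
  assert (Hp : incr phi) by (unfold phi; apply (incr_comp phi1 phi2); auto).
  set (y := fun j => if lt_dec j N then (L1 j, L2 j) else Czero).
  assert (Hy : forall j, Ccv (fun n => xs (phi n) j) (y j)).
  { intros j. unfold y. destruct (lt_dec j N).
    - split; simpl. apply (subseq_cv (fun n => fst (xs (phi1 n) j))); auto. apply HL2; auto.
    - replace (fun n => xs (phi n) j) with (fun _ : nat => Czero). apply Ccv_const.
      apply functional_extensionality; intros. destruct (Hxs (phi x)) as [[_ Hz] _]. rewrite Hz; auto. lia. }
  assert (HyB : inB is_real N y).
  { split. split.
    - intros j. unfold scalar. destruct is_real eqn:Er; auto.
      destruct (Hy j) as [_ H2]. apply (UL_sequence (fun n => snd (xs (phi n) j))); auto.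
      replace (fun n => snd (xs (phi n) j)) with (fun _ : nat => 0). apply cv_const.
      apply functional_extensionality; intros. destruct (Hxs (phi x)) as [[Hs _] _]. specialize (Hs j).
      unfold scalar in Hs. simpl in Hs; auto.
    - intros j Hj. unfold y. destruct (lt_dec j N); auto. lia.
    - unfold l1norm. apply Rle_cv_lim with (Un := fun n => sumR N (fun j => Cmod (xs (phi n) j))) (Vn := fun _ => 1).
      intros n. apply (Hxs (phi n)). apply sumR_cv. intros. apply Cmod_cv; auto. apply cv_const. }
  assert (HQy : Cmod (Q js y) = r).
  { apply (UL_sequence (fun n => Cmod (Q js (xs (phi n))))).
    apply Cmod_cv. apply Ccv_Q; auto.
    apply (subseq_cv (fun n => Cmod (Q js (xs n)))); auto. }
  destruct (proj1 (part1 is_real N js y Hm HN HyB)) as [c [Hc [Hc1 Hyc]]].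
  { rewrite HQy. auto. }
  exists c. split; auto. split; auto. exists phi. split. apply Hp.
  replace 0 with (sumR N (fun _ => Cmod (Csub Czero Czero))).
  unfold l1norm. apply sumR_cv. intros j Hj. apply Cmod_cv.
  replace (Csub Czero Czero) with (Csub (y j) (vscale c (target js Cone) j)).
  apply (Ccv_sub (fun n => xs (phi n) j) (fun _ => vscale c (target js Cone) j)); auto. apply Ccv_const.
  rewrite Hyc. unfold vscale. rewrite !target_eq. apply Cx_eq; unfold Csub, Cmul, Cone, RtoC, Czero; simpl; ring.
  rewrite (sumR_ext _ _ (fun _ => 0)). apply sumR_zero. intros.
  unfold Cmod, Csub, Czero; simpl. replace ((0-0)*(0-0)+(0-0)*(0-0)) with 0 by ring. apply sqrt_0.
Qed.

Theorem lemma4p4 (is_real : bool) (N m : nat) (js : list nat) :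
  (1 <= m)%nat -> length js = m -> Forall (fun j => (j < N)%nat) js ->
  (forall x : vec, inB is_real N x ->
     (pnorm_is is_real N (Q js) (Cmod (Q js x)) <->
      exists c : Cx, scalar is_real c /\ Cmod c = 1 /\ x = target js c)) /\
  strongly_attains is_real N (Q js) (target js Cone).
Proof.
  intros Hm Hl HN. subst m. split.
  - intros x Hx. apply part1; auto.
  - apply strong; auto.
Qed.
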